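(* Let $G$ be a graph with vertices labelled $1,\dots,n$, let $A$ be an $\mathrm{Aut}\,G$-invariant normal subgroup of $\mathbb{Z}_2^{*V(G)}$, and let $\Gamma=\mathbb{Z}_2^{*V(G)}/A$. Then there exists a skew graph category $\mathscr{C}$ such that $\mathscr{C}^G$ is the representation category of the quantum group $\mathbb{G}=\hat\Gamma\rtimes\mathrm{Aut}\,G$, i.e. $\mathscr{C}^G(k,l)=\mathrm{Mor}(u^{\otimes k},u^{\otimes l})$ for all $k,l\in\mathbb{N}_0$, where $u$ is the fundamental representation of $\mathbb{G}$.
   Context: Graphs are finite, undirected, without multiple edges, loops allowed, up to isomorphism; $N_k$ is the edgeless graph on $k$ vertices; graph homomorphisms map edges (including loops) to edges. $\mathbb{Z}_2^{*V}$ is the group generated by the set $V$ subject to $v^2=e$; automorphisms of $G$ act on $\mathbb{Z}_2^{*V(G)}$ by permuting generators. A vertex overlap of graphs $K,H$ is a subset $f\subset V(K)\times V(H)$ in which each vertex occurs at most once; $K\cup_fH$ is the quotient of $K\sqcup H$ identifying $v$ with $w$ for $(v,w)\in f$, with induced maps $f_K,f_H$. A bilabelled graph is $(K,\mathbf{a},\mathbf{b})$ with $\mathbf{a}\in V(K)^k$, $\mathbf{b}\in V(K)^l$, up to isomorphism preserving tuples; $\mathscr{C}(k,l)$ those with $k$ inputs, $l$ outputs. A skew graph category is a set of bilabelled graphs containing $(N_0,\emptyset,\emptyset)$, $(M,(v),(v))$, $(M,\emptyset,(v,v))$ ($M$ the one-vertex loopless graph with vertex $v$), closed under all $f$-unions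 $(K,\mathbf{a},\mathbf{b})\cup_f(H,\mathbf{c},\mathbf{d})=(K\cup_fH,f_K(\mathbf{a})f_H(\mathbf{c}),f_K(\mathbf{b})f_H(\mathbf{d}))$, under involution $(K,\mathbf{a},\mathbf{b})\mapsto(K,\mathbf{b},\mathbf{a})$, and under compositions $(H,\mathbf{c},\mathbf{d})\cdot(K,\mathbf{a},\mathbf{b})=(H\cdot K,\mathbf{a},\mathbf{d})$ ($H\cdot K$ the quotient of $K\sqcup H$ identifying $b_i$ with $c_i$) whenever $\mathbf{b}$ and $\mathbf{c}$ have the same pattern of equal entries. $\hat T^G_{(K,\mathbf{a},\mathbf{b})}\colon(\mathbb{C}^n)^{\otimes k}\to(\mathbb{C}^n)^{\otimes l}$ has $(\mathbf{j},\mathbf{i})$-entry $\#\{\phi\colon K\to G\text{ injective homomorphism}\mid\phi(\mathbf{a})=\mathbf{i},\phi(\mathbf{b})=\mathbf{j}\}$ and $\mathscr{C}^G(k,l)=\mathrm{span}\{\hat T^G_{\mathbf{K}}\mid\mathbf{K}\in\mathscr{C}(k,l)\}$. Quantum groups: for an orthogonal compact matrix quantum group $(O(\mathbb{G}),u)$, $\mathrm{Mor}(u^{\otimes k},u^{\otimes l})=\{T\colon(\mathbb{C}^n)^{\otimes k}\to(\mathbb{C}^n)^{\otimes l}\mid Tu^{\otimes k}=u^{\otimes l}T\}$. A permutation group $H\subset S_n$ is the quantum group $(O(H),v)$ with $v_{ij}(\sigma)=\delta_{i\sigma(j)}$; $\mathrm{Aut}\,G\subset S_n$ via the labelling. For $\Gamma$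 a quotient of $\mathbb{Z}_2^{*n}$ by an $H$-invariant normal subgroup, with $\gamma_i\in\mathbb{C}\Gamma$ the images of the generators, $\hat\Gamma\rtimes H$ is $(\mathbb{C}\Gamma\otimes O(H),u)$ with $u_{ij}=\gamma_i\otimes v_{ij}$. *)

(* Defs.v *)
From HB Require Import structures.
From mathcomp Require Import all_boot all_order all_algebra.
From mathcomp Require Import fingroup perm.
From mathcomp Require Import complex reals.
Set Implicit Arguments. Unset Strict Implicit. Unset Printing Implicit Defensive.
Import Order.TTheory GRing.Theory Num.Theory.
Local Open Scope ring_scope.

(* A concrete bilabelled graph: vertices 'I_bg_n, adjacency relation (loops
   allowed, symmetry imposed in [skew_graph_category]), input tuple bg_in
   (the a), output tuple bg_out (the b). *)
Record bgraph := BGraph {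
  bg_n : nat;
  bg_adj : rel 'I_bg_n;
  bg_in : seq 'I_bg_n;
  bg_out : seq 'I_bg_n }.

Definition bg_iso (K L : bgraph) : Prop :=
  exists h : 'I_(bg_n K) -> 'I_(bg_n L),
    bijective h /\ (forall x y, bg_adj (h x) (h y) = bg_adj x y) /\
    map h (bg_in K) = bg_in L /\ map h (bg_out K) = bg_out L.

Definition rel0 (m : nat) : rel 'I_m := fun _ _ => false.

Definition bgN0 : bgraph := @BGraph 0 (@rel0 0) [::] [::].
Definition bgM1 : bgraph := @BGraph 1 (@rel0 1) [:: ord0] [:: ord0].
Definition bgM2 : bgraph := @BGraph 1 (@rel0 1) [::] [:: ord0; ord0].

Definition bg_swap (K : bgraph) : bgraph :=
  @BGraph (bg_n K) (@bg_adj K) (bg_out K) (bg_in K).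

Definition vertex_overlap (K H : bgraph) (f : seq ('I_(bg_n K) * 'I_(bg_n H))) :=
  uniq (map fst f) && uniq (map snd f).

(* L (with maps fK, fH) is the quotient of K ⊔ H identifying v with w
   exactly when (v,w) ∈ f; edges of L are the images of the edges of K and H
   (no multiple edges). This characterizes the quotient up to isomorphism. *)
Definition is_glue (K H : bgraph) (f : seq ('I_(bg_n K) * 'I_(bg_n H)))
    (L : bgraph) (fK : 'I_(bg_n K) -> 'I_(bg_n L)) (fH : 'I_(bg_n H) -> 'I_(bg_n L)) : Prop :=
  injective fK /\ injective fH /\
  (forall x, (exists v, fK v = x) \/ (exists w, fH w = x)) /\
  (forall v w, fK v = fH w <-> (v, w) \in f) /\
  (forall x y, bg_adj x y <->
     (exists v v', [/\ bg_adj v v', fK v = x & fK v' = y]) \/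
     (exists w w', [/\ bg_adj w w', fH w = x & fH w' = y])).

Definition is_funion (K H : bgraph) (f : seq ('I_(bg_n K) * 'I_(bg_n H))) (L : bgraph) : Prop :=
  vertex_overlap f /\
  exists fK fH, @is_glue K H f L fK fH /\
    bg_in L = map fK (bg_in K) ++ map fH (bg_in H) /\
    bg_out L = map fK (bg_out K) ++ map fH (bg_out H).

Definition same_pattern (m m' : nat) (b : seq 'I_m) (c : seq 'I_m') : Prop :=
  size b = size c /\
  forall i j, (i < size b)%N -> (j < size b)%N ->
    (nth 0%N (map val b) i == nth 0%N (map val b) j) =
    (nth 0%N (map val c) i == nth 0%N (map val c) j).

Definition is_comp (H K L : bgraph) : Prop :=
  same_pattern (bg_out K) (bg_in H) /\
  exists fK fH, @is_glue K H (zip (bg_out K) (bg_in H)) L fK fH /\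
    bg_in L = map fK (bg_in K) /\ bg_out L = map fH (bg_out H).

(* A skew graph category, as an isomorphism-closed set of (representatives of)
   bilabelled graphs. *)
Definition skew_graph_category (C : bgraph -> Prop) : Prop :=
  (forall K, C K -> symmetric (@bg_adj K)) /\
  (forall K L, bg_iso K L -> C K -> C L) /\
  C bgN0 /\ C bgM1 /\ C bgM2 /\
  (forall K H f L, C K -> C H -> @is_funion K H f L -> C L) /\
  (forall K, C K -> C (bg_swap K)) /\
  (forall H K L, C H -> C K -> is_comp H K L -> C L).

Section Hom.
Variables (F : nzRingType) (n : nat) (adjG : rel 'I_n).

Definition is_hom (K : bgraph) (phi : {ffun 'I_(bg_n K) -> 'I_n}) : bool :=
  [forall x, forall y, bg_adj x y ==> adjG (phi x) (phi y)].

Definition homT (K : bgraph) (j i : seq 'I_n) : F :=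
  (#|[set phi : {ffun 'I_(bg_n K) -> 'I_n} |
       [&& injectiveb phi, is_hom phi,
           map phi (bg_in K) == i & map phi (bg_out K) == j]]|)%:R.

Definition in_graph_span (C : bgraph -> Prop) (k l : nat)
    (T : l.-tuple 'I_n -> k.-tuple 'I_n -> F) : Prop :=
  exists (m : nat) (c : 'I_m -> F) (Ks : 'I_m -> bgraph),
    (forall t, [/\ C (Ks t), size (bg_in (Ks t)) = k & size (bg_out (Ks t)) = l]) /\
    (forall j i, T j i = \sum_(t < m) c t * homT (Ks t) j i).
End Hom.

Definition autb (n : nat) (adjG : rel 'I_n) (s : {perm 'I_n}) : bool :=
  [forall x, forall y, adjG (s x) (s y) == adjG x y].

(* Z_2^{*n} is modelled by reduced words over 'I_n (no two equal adjacent
   letters); [red] is free reduction using the relations v^2 = e. *)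
Definition push (n : nat) (a : 'I_n) (w : seq 'I_n) : seq 'I_n :=
  if w is b :: w' then (if a == b then w' else a :: w) else [:: a].
Definition red (n : nat) (w : seq 'I_n) : seq 'I_n := foldr (@push n) [::] w.

(* A is an Aut G-invariant normal subgroup of Z_2^{*n}
   (product = reduced concatenation, inverse = reversal, automorphisms act by
   permuting letters). *)
Definition aut_inv_normal_subgroup (n : nat) (adjG : rel 'I_n) (A : pred (seq 'I_n)) : Prop :=
  (forall x, A x -> red x = x) /\
  A [::] /\
  (forall x y, A x -> A y -> A (red (x ++ y))) /\
  (forall x, A x -> A (rev x)) /\
  (forall g x, red g = g -> A x -> A (red (rev g ++ x ++ g))) /\
  (forall s : {perm 'I_n}, autb adjG s -> forall x, A x -> A (map s x)).

Definition gequiv (n : nat) (A : pred (seq 'I_n)) (p q : seq 'I_n) : bool :=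
  A (red (p ++ rev q)).

Section Alg.
Variables (Cx : nzRingType) (n : nat).

(* An element is a finite sum of pure tensors  c * (gamma_p ⊗ f),
   with p a word (representing an element of Gamma) and f a function on
   permutations (only its restriction to Aut G matters). *)
Definition Oelt := seq (Cx * seq 'I_n * ({perm 'I_n} -> Cx)).

(* Faithful evaluation: the element sum c * gamma_p ⊗ f is sent to the
   function (s, w) |-> sum c * [w ~ p] * f s on Aut G × words; this is
   injective on C Gamma ⊗ O(Aut G) (indicators of distinct classes are
   linearly independent). *)
Definition oev (A : pred (seq 'I_n)) (x : Oelt) (s : {perm 'I_n}) (w : seq 'I_n) : Cx :=
  \sum_(t <- x) t.1.1 * (if gequiv A w t.1.2 then 1 else 0) * t.2 s.

Definition omul (x y : Oelt) : Oelt :=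
  [seq ((t.1.1 * t'.1.1, t.1.2 ++ t'.1.2), fun s => t.2 s * t'.2 s) | t <- x, t' <- y].
Definition oone : Oelt := [:: (1, [::], fun _ => 1)].
Definition oscale (c : Cx) (x : Oelt) : Oelt := [seq (c * t.1.1, t.1.2, t.2) | t <- x].

Definition uent (i j : 'I_n) : Oelt :=
  [:: (1, [:: i], fun s : {perm 'I_n} => if i == s j then 1 else 0)].

Definition utens (p i : seq 'I_n) : Oelt :=
  foldr omul oone [seq uent x.1 x.2 | x <- zip p i].

Definition is_mor (A : pred (seq 'I_n)) (adjG : rel 'I_n) (k l : nat)
    (T : l.-tuple 'I_n -> k.-tuple 'I_n -> Cx) : Prop :=
  forall (j : l.-tuple 'I_n) (i : k.-tuple 'I_n) (s : {perm 'I_n}) (w : seq 'I_n),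
    autb adjG s ->
    oev A (flatten [seq oscale (T j p) (utens p i) | p <- enum {: k.-tuple 'I_n}]) s w =
    oev A (flatten [seq oscale (T q i) (utens j q) | q <- enum {: l.-tuple 'I_n}]) s w.
End Alg.

(* Main.v *)
Require Import Defs.
From HB Require Import structures.
From mathcomp Require Import all_boot all_order all_algebra.
From mathcomp Require Import fingroup perm.
From mathcomp Require Import complex reals.
Local Open Scope ring_scope.

Import Order.TTheory GRing.Theory Num.Theory.
Set Implicit Arguments. Unset Strict Implicit.

Section Words.
Variable n : nat.
Implicit Types (x y z u v w g : seq 'I_n) (a b : 'I_n).

Fixpoint redd (w : seq 'I_n) : bool :=
  match w with
  | a :: ((b :: _) as w') => (a != b) && redd w'
  | _ => true
  end.

Lemma redd_push a w : redd w -> redd (push a w).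
Proof.
case: w => [|b w] //= H.
case: (a =P b) => [_|/eqP ab].
  by case: w H => [|c w] //= /andP[].
by rewrite /= ab H.
Qed.

Lemma redd_red w : redd (red w).
Proof. by elim: w => [|a w IH] //=; apply: redd_push. Qed.

Lemma pushK a w : redd w -> push a (push a w) = w.
Proof.
case: w => [|b w] /=; first by rewrite /= eqxx.
case: (a =P b) => [<-|/eqP ab] H.
  case: w H => [|c w] //= /andP[ac _]; by rewrite (negbTE ac).
by rewrite /= eqxx.
Qed.

Lemma red_redd w : redd w -> red w = w.
Proof.
elim: w => [|a w IH] //= H.
have Hw : redd w by case: w IH H => //= b w _ /andP[].
rewrite IH //; case: w H {IH Hw} => [|b w] //= /andP[ab _].
by rewrite (negbTE ab).
Qed.

Definition act x z := foldr (@push n) z x.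

Lemma redd_act x z : redd z -> redd (act x z).
Proof. by elim: x => [|a x IH] //= Hz; apply: redd_push; apply: IH. Qed.

Lemma act_push a r z : redd r -> redd z -> act (push a r) z = push a (act r z).
Proof.
move=> Hr Hz; case: r Hr => [|b r] //= Hr.
case: eqP => [<-|_] //=.
by rewrite pushK // redd_act //; case: r Hr => //= c r /andP[].
Qed.

Lemma act_red x z : redd z -> act (red x) z = act x z.
Proof.
move=> Hz; elim: x => [|a x IH] //=.
by rewrite act_push ?redd_red // IH.
Qed.

Lemma red_cat x y : red (x ++ y) = act x (red y).
Proof. by rewrite /red foldr_cat. Qed.

Lemma redL x y : red (red x ++ y) = red (x ++ y).
Proof. by rewrite !red_cat act_red // redd_red. Qed.

Lemma redR x y : red (x ++ red y) = red (x ++ y).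
Proof. by rewrite !red_cat red_redd // redd_red. Qed.

Lemma red_idem x : red (red x) = red x.
Proof. by rewrite red_redd // redd_red. Qed.

Lemma redM u v w : red (u ++ red v ++ w) = red (u ++ v ++ w).
Proof. by rewrite -redR redL redR. Qed.

Lemma red_cancel x : red (x ++ rev x) = [::].
Proof.
elim: x => [|a x IH] //=.
rewrite rev_cons -cats1 catA -redL IH /=.
by rewrite eqxx.
Qed.

Lemma redC u x w : red (u ++ x ++ rev x ++ w) = red (u ++ w).
Proof. by rewrite [x ++ _]catA -(redM u (x ++ rev x)) red_cancel. Qed.

Lemma redC' u x w : red (u ++ rev x ++ x ++ w) = red (u ++ w).
Proof. by rewrite -{2}(revK x) redC. Qed.

Lemma map_push (s : 'I_n -> 'I_n) a w : injective s ->
  map s (push a w) = push (s a) (map s w).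
Proof.
move=> si; case: w => [|b w] //=.
by rewrite (inj_eq si); case: eqP.
Qed.

Lemma map_red (s : 'I_n -> 'I_n) w : injective s -> map s (red w) = red (map s w).
Proof. by move=> si; elim: w => [|a w IH] //=; rewrite map_push // IH. Qed.

End Words.

Section Grp.
Variables (n : nat) (adjG : rel 'I_n) (A : pred (seq 'I_n)).
Hypothesis HA : aut_inv_normal_subgroup adjG A.

Lemma A_red x : A x -> red x = x.
Proof. by case: HA => H _; apply: H. Qed.

Lemma A_nil : A [::].
Proof. by case: HA => _ []. Qed.

Lemma A_mul x y : A (red x) -> A (red y) -> A (red (x ++ y)).
Proof.
case: HA => _ [_ [Hm _]] hx hy.
by rewrite -redL -redR; apply: Hm.
Qed.

Lemma A_inv p q : A (red (p ++ rev q)) -> A (red (q ++ rev p)).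
Proof.
case: HA => Hr [_ [_ [Hrev _]]] H.
set g := red (p ++ rev q) in H.
have Hg : A (rev g) by apply: Hrev.
suff -> : red (q ++ rev p) = rev g by [].
have e1 : red (q ++ rev p) = red (rev g ++ g ++ q ++ rev p).
  by have := redC' [::] g (q ++ rev p); rewrite cat0s => ->.
rewrite e1 /g redM -!catA.
have := redC' (rev (red (p ++ rev q)) ++ p) q (rev p); rewrite -!catA => ->.
have := redC (rev (red (p ++ rev q))) p [::]; rewrite !cats0 => ->.
by apply: Hr.
Qed.

Lemma A_conj g x : A (red x) -> A (red (g ++ x ++ rev g)).
Proof.
case: HA => Hr [_ [_ [_ [Hn _]]]] H.
set g0 := red (rev g).
have := Hn g0 (red x) (red_idem _) H.
have e0 : red (g0 ++ g) = [::].
  by rewrite /g0 redL -{2}(revK g) red_cancel.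
have key z : red (rev g0 ++ z) = red (g ++ z).
  have := redM (rev g0) (g0 ++ g) z; rewrite e0 cat0s -!catA => ->.
  by have := redC' [::] g0 (g ++ z); rewrite !cat0s.
rewrite redM catA -redR /g0 redR -catA key.
by rewrite catA redR -catA.
Qed.

Lemma A_aut (s : {perm 'I_n}) x : autb adjG s -> A (red x) -> A (red (map s x)).
Proof.
case: HA => _ [_ [_ [_ [_ Ha]]]] hs H.
by rewrite -map_red; [apply: Ha | apply: perm_inj].
Qed.

Definition wok (p q : seq 'I_n) := A (red (p ++ rev q)).

Lemma wok_sym p q : wok p q -> wok q p.
Proof. exact: A_inv. Qed.

Lemma wok_trans p q r : wok p q -> wok q r -> wok p r.
Proof.
rewrite /wok => h1 h2; have := A_mul h1 h2.
by rewrite -!catA redC'.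
Qed.

Lemma wok_cat xb xa yb ya : wok xb xa -> wok yb ya -> wok (xb ++ yb) (xa ++ ya).
Proof.
rewrite /wok => h1 h2; have := A_mul (A_conj xb h2) h1.
have e := redC' (xb ++ yb ++ rev ya) xb (rev xa); rewrite -!catA in e.
by rewrite rev_cat -!catA e.
Qed.

Lemma wok_refl x : wok x x.
Proof. by rewrite /wok red_cancel; apply: A_nil. Qed.
End Grp.


Section O.
Variables (F : comNzRingType) (n : nat) (A : pred (seq 'I_n)).

Definition dp (l : seq ('I_n * 'I_n)) (s : {perm 'I_n}) : F :=
  foldr (fun x r => (if x.1 == s x.2 then 1 else 0) * r) 1 l.

Lemma utens_gen (l : seq ('I_n * 'I_n)) :
  exists c f, foldr (@omul F n) (@oone F n) [seq uent F x.1 x.2 | x <- l] = [:: (c, map fst l, f)]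
    /\ c = 1 /\ forall s, f s = dp l s.
Proof.
elim: l => [|x l [c [f [IH [ec Hf]]]]].
  by exists 1, (fun _ => 1).
rewrite /= IH ec.
eexists; eexists; split; first reflexivity.
by split; [rewrite mul1r | move=> s /=; rewrite Hf].
Qed.

Lemma dp_zip (p i : seq 'I_n) s : size p = size i ->
  dp (zip p i) s = if p == map s i then 1 else 0.
Proof.
elim: p i => [|a p IH] [|b i] //= [e].
rewrite IH // eqseq_cons.
by case: (a == s b); case: (p == _); rewrite ?mul1r ?mul0r.
Qed.

Lemma oev_utens (p i : seq 'I_n) s w : size p = size i ->
  oev A (utens F p i) s w =
  (if gequiv A w p then 1 else 0) * (if p == map s i then 1 else 0).
Proof.
move=> e; rewrite /utens; have [c [f [-> [-> Hf]]]] := utens_gen (zip p i).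
rewrite /oev big_seq1 /= mul1r Hf dp_zip //.
by rewrite -/(unzip1 _) unzip1_zip // e.
Qed.

Lemma oev_cat (x y : Oelt F n) s w : oev A (x ++ y) s w = oev A x s w + oev A y s w.
Proof. by rewrite /oev big_cat. Qed.

Lemma oev_scale (c : F) (x : Oelt F n) s w : oev A (oscale c x) s w = c * oev A x s w.
Proof.
rewrite /oev big_map big_distrr /=; apply: eq_bigr => t _.
by rewrite !mulrA.
Qed.

Lemma oev_flatten (T : Type) (r : seq T) (f : T -> Oelt F n) s w :
  oev A (flatten (map f r)) s w = \sum_(t <- r) oev A (f t) s w.
Proof.
elim: r => [|t r IH]; first by rewrite /= /oev !big_nil.
by rewrite /= oev_cat IH big_cons.
Qed.

Lemma sum_tuple_pick k (G : k.-tuple 'I_n -> F) (q : k.-tuple 'I_n) :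
  \sum_(p <- enum {: k.-tuple 'I_n}) G p * (if val p == val q then 1 else 0) = G q.
Proof.
rewrite big_enum /= (bigD1 q) //= eqxx mulr1 big1 ?addr0 // => p pq.
by rewrite (inj_eq val_inj) (negbTE pq) mulr0.
Qed.

Lemma is_morE (adjG : rel 'I_n) k l (T : l.-tuple 'I_n -> k.-tuple 'I_n -> F) :
  is_mor A adjG T <->
  forall (j : l.-tuple 'I_n) (i : k.-tuple 'I_n) (s : {perm 'I_n}) w, autb adjG s ->
    T j (map_tuple s i) * (if gequiv A w (map s i) then 1 else 0) =
    T (map_tuple (s^-1)%g j) i * (if gequiv A w j then 1 else 0).
Proof.
have L : forall (j : l.-tuple 'I_n) (i : k.-tuple 'I_n) (s : {perm 'I_n}) w, oev A (flatten [seq oscale (T j p) (utens F p i) | p <- enum {: k.-tuple 'I_n}]) s w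
  = T j (map_tuple s i) * (if gequiv A w (map s i) then 1 else 0).
  move=> j i s w; rewrite oev_flatten.
  under eq_bigr => p _ do rewrite oev_scale oev_utens ?size_tuple // mulrA.
  rewrite -(sum_tuple_pick (fun p => T j p * (if gequiv A w p then 1 else 0)) (map_tuple s i)).
  by [].
have R : forall (j : l.-tuple 'I_n) (i : k.-tuple 'I_n) (s : {perm 'I_n}) w, oev A (flatten [seq oscale (T q i) (utens F j q) | q <- enum {: l.-tuple 'I_n}]) s w
  = T (map_tuple (s^-1)%g j) i * (if gequiv A w j then 1 else 0).
  move=> j i s w; rewrite oev_flatten.
  under eq_bigr => q _ do rewrite oev_scale oev_utens ?size_tuple // mulrCA mulrA.
  under eq_bigr => q _ do rewrite -mulrA mulrC.
  rewrite -big_distrl /=; congr (_ * _).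
  rewrite -(sum_tuple_pick (fun q => T q i) (map_tuple (s^-1)%g j)); apply: eq_bigr => q _.
  have -> : (val j == map s q) = (val q == map (s^-1)%g j); last by [].
  apply/eqP/eqP => /= [->|->].
    by rewrite -map_comp map_id_in // => x _ /=; rewrite permK.
  by rewrite -map_comp map_id_in // => x _ /=; rewrite permKV.
split=> H j i s w hs.
  by rewrite -L -R; apply: H.
by rewrite L R; apply: H.
Qed.
End O.


Section Cat.
Variables (n : nat) (adjG : rel 'I_n) (A : pred (seq 'I_n)).
Hypothesis HA : aut_inv_normal_subgroup adjG A.

Definition Cset (K : bgraph) : Prop :=
  symmetric (@bg_adj K) /\
  forall phi : {ffun 'I_(bg_n K) -> 'I_n}, injectiveb phi -> is_hom adjG phi ->
    wok A (map phi (bg_out K)) (map phi (bg_in K)).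

Lemma homP (K : bgraph) (phi : {ffun 'I_(bg_n K) -> 'I_n}) :
  reflect (forall x y, bg_adj x y -> adjG (phi x) (phi y)) (is_hom adjG phi).
Proof.
apply: (iffP forallP) => [H x y|H x]; first by move: (H x) => /forallP /(_ y) /implyP.
by apply/forallP => y; apply/implyP; apply: H.
Qed.

Lemma pullback (K L : bgraph) (h : 'I_(bg_n K) -> 'I_(bg_n L))
  (phi : {ffun 'I_(bg_n L) -> 'I_n}) :
  injective h -> (forall x y, bg_adj x y -> bg_adj (h x) (h y)) ->
  injectiveb phi -> is_hom adjG phi ->
  let psi := [ffun x => phi (h x)] : {ffun 'I_(bg_n K) -> 'I_n} in
  [/\ injectiveb psi, is_hom adjG psi & forall s, map psi s = map phi (map h s)].
Proof.
move=> hi hh /injectiveP pi /homP ph psi; split.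
- apply/injectiveP => x y; rewrite !ffunE => /pi; exact: hi.
- by apply/homP => x y /hh /ph; rewrite !ffunE.
- by move=> s; rewrite -map_comp; apply: eq_map => x; rewrite ffunE.
Qed.

Lemma glue_sym K H f L fK fH : symmetric (@bg_adj K) -> symmetric (@bg_adj H) ->
  @is_glue K H f L fK fH -> symmetric (@bg_adj L).
Proof.
move=> sK sH [_ [_ [_ [_ Ha]]]].
have imp (x y : 'I_(bg_n L)) : bg_adj x y -> bg_adj y x.
  move=> e0; have := proj1 (Ha x y) e0.
  move=> [[v [v' [e <- <-]]]|[w [w' [e <- <-]]]]; apply/Ha.
    by left; exists v', v; rewrite sK.
  by right; exists w', w; rewrite sH.
by move=> x y; apply/idP/idP; apply: imp.
Qed.

Lemma glue_homK K H f L fK fH : @is_glue K H f L fK fH ->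
  forall x y, bg_adj x y -> bg_adj (fK x) (fK y).
Proof. by move=> [_ [_ [_ [_ Ha]]]] x y e; apply/(proj2 (Ha _ _)); left; exists x, y. Qed.

Lemma glue_homH K H f L fK fH : @is_glue K H f L fK fH ->
  forall x y, bg_adj x y -> bg_adj (fH x) (fH y).
Proof. by move=> [_ [_ [_ [_ Ha]]]] x y e; apply/(proj2 (Ha _ _)); right; exists x, y. Qed.

Lemma map_zip_eq (T1 T2 T3 : eqType) (f1 : T1 -> T3) (f2 : T2 -> T3) b c :
  size b = size c -> (forall v w, (v, w) \in zip b c -> f1 v = f2 w) ->
  map f1 b = map f2 c.
Proof.
elim: b c => [|v b IH] [|w c] //= [e] H.
rewrite (H v w) ?mem_head // (IH c) // => v' w' h.
by apply: H; rewrite in_cons h orbT.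
Qed.

Lemma Cset_cat : skew_graph_category Cset.
Proof.
split; first by move=> K [].
split.
  move=> K L [h [hb [ha [hin hout]]]] [sK HK].
  have [g hg gh] := hb.
  split.
    move=> x y; rewrite -(gh x) -(gh y) !ha; exact: sK.
  move=> phi pi ph.
  have [pi' ph' hm] := @pullback K L h phi (bij_inj hb) (fun x y e => etrans (ha x y) e) pi ph.
  by have := HK _ pi' ph'; rewrite !hm hin hout.
split.
  split; first by [].
  by move=> phi _ _; rewrite /wok /=; apply: (A_nil HA).
split.
  split; first by [].
  by move=> phi _ _; rewrite /wok /= eqxx; apply: (A_nil HA).
split.
  split; first by [].
  by move=> phi _ _; rewrite /wok /= eqxx; apply: (A_nil HA).
split.
  move=> K H f L [sK HK] [sH HH] [_ [fK [fH [gl [hin hout]]]]].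
  split; first exact: glue_sym gl.
  move=> phi pi ph.
  have [gi1 [gi2 _]] := gl.
  have [piK phK mK] := @pullback K L fK phi gi1 (glue_homK gl) pi ph.
  have [piH phH mH] := @pullback H L fH phi gi2 (glue_homH gl) pi ph.
  have wK := HK _ piK phK; have wH := HH _ piH phH.
  rewrite hout hin !map_cat -!mK -!mH.
  exact: (wok_cat HA).
split.
  move=> K [sK HK]; split; first exact: sK.
  move=> phi pi ph; apply: (wok_sym HA); exact: HK.
move=> H K L [sH HH] [sK HK] [[sz pat] [fK [fH [gl [hin hout]]]]].
split.
  apply: glue_sym gl; [exact: sK | exact: sH].
move=> phi pi ph.
have [gi1 [gi2 [_ [gf _]]]] := gl.
have [piK phK mK] := @pullback K L fK phi gi1 (glue_homK gl) pi ph.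
have [piH phH mH] := @pullback H L fH phi gi2 (glue_homH gl) pi ph.
have wK := HK _ piK phK; have wH := HH _ piH phH.
have e : map fK (bg_out K) = map fH (bg_in H).
  apply: map_zip_eq => // v w /gf; done.
rewrite hout hin -mK -mH.
apply: (wok_trans HA) wH _.
by rewrite !mH -e -mK.
Qed.
End Cat.


Section P.
Variables (n : nat) (adjG : rel 'I_n).

Lemma hom_reflect (phi : 'I_n -> 'I_n) : injective phi ->
  (forall x y, adjG x y -> adjG (phi x) (phi y)) ->
  forall x y, adjG (phi x) (phi y) = adjG x y.
Proof.
move=> pi ph x y.
pose E := [set p : 'I_n * 'I_n | adjG p.1 p.2].
pose psi := fun p : 'I_n * 'I_n => (phi p.1, phi p.2).
have psii : injective psi by move=> [a b] [c d] [/pi -> /pi ->].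
have sub : psi @: E \subset E.
  by apply/subsetP => q /imsetP [p]; rewrite !inE => hp ->; rewrite /= ph.
have eq : psi @: E = E.
  by apply/eqP; rewrite eqEcard sub (card_imset _ psii) leqnn.
apply/idP/idP; last exact: ph.
move=> h; have : (phi x, phi y) \in psi @: E by rewrite eq inE.
case/imsetP => [[a b]]; rewrite inE => hp [/pi -> /pi ->]; exact: hp.
Qed.

Lemma autb_inj_hom (phi : 'I_n -> 'I_n) (pi : injective phi) :
  (forall x y, adjG x y -> adjG (phi x) (phi y)) -> autb adjG (perm pi).
Proof.
move=> ph; apply/forallP => x; apply/forallP => y; apply/eqP.
by rewrite !permE hom_reflect.
Qed.

Lemma autbV (s : {perm 'I_n}) : autb adjG s -> autb adjG (s^-1)%g.
Proof.
move=> /forallP hs; apply/forallP => x; apply/forallP => y; apply/eqP.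
have := hs ((s^-1)%g x) => /forallP /(_ ((s^-1)%g y)) /eqP.
by rewrite !permKV => ->.
Qed.

Lemma autb_adj (s : {perm 'I_n}) x y : autb adjG s -> adjG (s x) (s y) = adjG x y.
Proof. by move=> /forallP /(_ x) /forallP /(_ y) /eqP. Qed.

Variable F : nzRingType.

Lemma homT_le (K : bgraph) (s : {perm 'I_n}) j i : autb adjG s ->
  (#|[set phi : {ffun 'I_(bg_n K) -> 'I_n} |
       [&& injectiveb phi, is_hom adjG phi, map phi (bg_in K) == i & map phi (bg_out K) == j]]|
  <= #|[set phi : {ffun 'I_(bg_n K) -> 'I_n} |
       [&& injectiveb phi, is_hom adjG phi, map phi (bg_in K) == map s i & map phi (bg_out K) == map s j]]|)%N.
Proof.
move=> hs.
pose g := fun phi : {ffun 'I_(bg_n K) -> 'I_n} => [ffun x => s (phi x)].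
have gi : injective g.
  move=> p q /ffunP e; apply/ffunP => x; have := e x; rewrite !ffunE; exact: perm_inj.
rewrite -(card_imset _ gi); apply: subset_leq_card; apply/subsetP => q /imsetP [p].
rewrite !inE => /and4P [/injectiveP pi /homP ph /eqP hi /eqP hj] ->.
have mg r : map (g p) r = map s (map p r) by rewrite -map_comp; apply: eq_map => x; rewrite ffunE.
apply/and4P; split.
- by apply/injectiveP => x y; rewrite !ffunE => /perm_inj /pi.
- by apply/homP => x y /ph; rewrite !ffunE autb_adj.
- by rewrite mg hi.
- by rewrite mg hj.
Qed.

Lemma homT_aut (K : bgraph) (s : {perm 'I_n}) j i : autb adjG s ->
  homT F adjG K (map s j) (map s i) = homT F adjG K j i.
Proof.
move=> hs; rewrite /homT; congr (_ %:R); apply/eqP; rewrite eqn_leq homT_le // andbT.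
have H := homT_le K (map s j) (map s i) (autbV hs).
have e r : map (s^-1)%g (map s r) = r.
  by rewrite -map_comp map_id_in // => x _ /=; rewrite permK.
by rewrite !e in H.
Qed.
End P.


Section Main.
Variables (R : realType) (n : nat) (adjG : rel 'I_n).
Hypothesis adjG_sym : symmetric adjG.
Variable A : pred (seq 'I_n).
Hypothesis HA : aut_inv_normal_subgroup adjG A.

Lemma map_tuple1 k (x : k.-tuple 'I_n) : map_tuple (1%g : {perm 'I_n}) x = x.
Proof. by apply: val_inj => /=; rewrite map_id_in // => y _; rewrite perm1. Qed.

Lemma map_tupleK k (s : {perm 'I_n}) (x : k.-tuple 'I_n) :
  map_tuple s (map_tuple (s^-1)%g x) = x.
Proof. by apply: val_inj => /=; rewrite -map_comp map_id_in // => y _ /=; rewrite permKV. Qed.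

Lemma mapK' (s : {perm 'I_n}) (x : seq 'I_n) : map s (map (s^-1)%g x) = x.
Proof. by rewrite -map_comp map_id_in // => y _ /=; rewrite permKV. Qed.

Lemma autb1 : autb adjG (1%g : {perm 'I_n}).
Proof. by apply/forallP => x; apply/forallP => y; rewrite !perm1. Qed.

Lemma inj_hom_wok (phi : {ffun 'I_n -> 'I_n}) (j i : seq 'I_n) :
  injectiveb phi -> [forall x, forall y, adjG x y ==> adjG (phi x) (phi y)] ->
  wok A j i -> wok A (map phi j) (map phi i).
Proof.
move=> /injectiveP pi hom w.
have ph : forall x y, adjG x y -> adjG (phi x) (phi y).
  by move=> x y; move: hom => /forallP /(_ x) /forallP /(_ y) /implyP.
have hs := @autb_inj_hom n adjG phi pi ph.
have em r : map phi r = map (perm pi) r by apply: eq_map => x; rewrite permE.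
rewrite !em /wok -map_rev -map_cat.
exact: (A_aut HA hs).
Qed.

Theorem main :
  exists C : bgraph -> Prop,
    skew_graph_category C /\
    forall (k l : nat) (T : l.-tuple 'I_n -> k.-tuple 'I_n -> R[i]),
      in_graph_span adjG C T <-> is_mor A adjG T.
Proof.
exists (Cset adjG A); split; first exact: Cset_cat.
move=> k l T; rewrite is_morE; split.
- move=> [m [c [Ks [HK HT]]]] j i s w hs.
  rewrite !HT !mulr_suml; apply: eq_bigr => t _; rewrite -!mulrA; congr (c t * _).
  have [CK _ _] := HK t.
  set K := Ks t in CK *.
  have e : homT R[i] adjG K (map_tuple (s^-1)%g j) i = homT R[i] adjG K j (map_tuple s i).
    by rewrite -(@homT_aut n adjG R[i] K s _ _ hs) /= mapK'.
  rewrite e /homT.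
  set S := [set phi | _].
  have [->|[phi]] := set_0Vmem S; first by rewrite cards0 !mul0r.
  rewrite inE => /and4P [pi ph /eqP hi /eqP ho].
  have wj : wok A j (map s i).
    by have := (proj2 CK) phi pi ph; rewrite hi ho.
  have -> : gequiv A w (map s i) = gequiv A w j; last by [].
  apply/idP/idP => h.
    exact: (wok_trans HA) h (wok_sym HA wj).
  exact: (wok_trans HA) h wj.
- move=> H.
  have nz : forall j i, T j i != 0 -> wok A j i.
    move=> j i; have := H j i 1%g j autb1.
    rewrite map_tuple1 invg1 map_tuple1 /= map_id_in; last by move=> x _; rewrite perm1.
    have -> : gequiv A j j by apply: (wok_refl HA).
    rewrite mulr1; case E: (gequiv A j i); first by move=> _ _; exact: E.
    by rewrite mulr0 => <-; rewrite eqxx.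
  have inv : forall j i (s : {perm 'I_n}), autb adjG s ->
      T j (map_tuple s i) = T (map_tuple (s^-1)%g j) i.
    move=> j i s hs.
    have H1 := H j i s j hs; have H2 := H j i s (map s i) hs.
    move: H1 H2.
    have -> : gequiv A j j by apply: (wok_refl HA).
    rewrite mulr1.
    have -> : gequiv A (map s i) (map s i) by apply: (wok_refl HA).
    rewrite mulr1.
    case E: (gequiv A j (map s i)); first by rewrite mulr1.
    have -> : gequiv A (map s i) j = false.
      by apply/negbTE/negP => /(wok_sym HA); rewrite /wok; move/negbT: E => /negP.
    by rewrite !mulr0 => <- ->.
  pose P : finType := (l.-tuple 'I_n * k.-tuple 'I_n)%type.
  pose Hs := [set phi : {ffun 'I_n -> 'I_n} | injectiveb phi &&
               [forall x, forall y, adjG x y ==> adjG (phi x) (phi y)]].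
  pose N := #|Hs|.
  have Npos : (N%:R : R[i]) != 0.
    rewrite pnatr_eq0 -lt0n card_gt0; apply/set0Pn; exists [ffun x => x].
    rewrite inE; apply/andP; split.
      by apply/injectiveP => x y; rewrite !ffunE.
    by apply/forallP => x; apply/forallP => y; rewrite !ffunE; apply/implyP.
  pose GK := fun x : P => @BGraph n adjG (val x.2) (val x.1).
  pose Dummy := @BGraph n.+1 (@rel0 n.+1) (nseq k ord0) (nseq l ord0).
  pose e := fun t : 'I_#|P| => (enum_val t : P).
  exists #|P|, (fun t => T (e t).1 (e t).2 / N%:R),
    (fun t => if T (e t).1 (e t).2 != 0 then GK (e t) else Dummy).
  split.
    move=> t; case: ifP => [nzt|_].
      split; [split => // | by rewrite /= size_tuple | by rewrite /= size_tuple].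
      move=> phi pi ph; exact: inj_hom_wok pi ph (nz _ _ nzt).
    split; [split => // | by rewrite size_nseq | by rewrite size_nseq].
    move=> phi /injectiveP pi; have := leq_card _ pi; rewrite !card_ord ltnn.
    by [].
  move=> j i.
  have homE : forall x : P, homT R[i] adjG (GK x) j i =
      \sum_(phi in Hs) ((map phi x.2 == i) && (map phi x.1 == j) : nat)%:R.
    move=> x; rewrite /homT -sum1_card natr_sum big_mkcond [RHS]big_mkcond /=.
    apply: eq_bigr => phi _; rewrite !inE /is_hom /=.
    case: (injectiveb phi) => //=; case: [forall x0, _] => //=; by case: (_ && _).
  rewrite (eq_bigr (fun t => T (e t).1 (e t).2 / N%:R * homT R[i] adjG (GK (e t)) j i)); last first.
    by move=> t _; case: ifP => // /negbFE/eqP ->; rewrite !mul0r.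
  rewrite -(big_enum_val (fun x : P => T x.1 x.2 / N%:R * homT R[i] adjG (GK x) j i)) /=.
  under eq_bigr => x _ do rewrite homE mulr_sumr.
  rewrite exchange_big /=.
  have inner : forall phi, phi \in Hs ->
      \sum_(x in P) T x.1 x.2 / N%:R * ((map phi x.2 == i) && (map phi x.1 == j) : nat)%:R
      = T j i / N%:R.
    move=> phi; rewrite inE => /andP [/injectiveP pi hom].
    have ph : forall x y, adjG x y -> adjG (phi x) (phi y).
      by move=> x y; move: hom => /forallP /(_ x) /forallP /(_ y) /implyP.
    have hs := @autb_inj_hom n adjG phi pi ph.
    set s := perm pi in hs.
    have em r : map phi r = map s r by apply: eq_map => x; rewrite permE.
    have meq m' (y z : m'.-tuple 'I_n) : (map s y == z :> seq _) = (y == map_tuple (s^-1)%g z).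
      apply/eqP/eqP => [h|->]; last by rewrite /= mapK'.
      by apply: val_inj => /=; rewrite -h -map_comp map_id_in // => u _ /=; rewrite permK.
    pose x0 : P := (map_tuple (s^-1)%g j, map_tuple (s^-1)%g i).
    rewrite (bigD1 x0) //= big1 ?addr0.
      rewrite !em !meq !eqxx mulr1 -inv // map_tupleK.
      by [].
    move=> [x1 x2] hne /=.
    rewrite !em !meq.
    case: (x2 =P _) => [e2|]; case: (x1 =P _) => [e1|] //=; rewrite ?mulr0 //.
    by move: hne; rewrite /x0 e1 e2 eqxx.
  rewrite (eq_bigr _ inner) sumr_const.
by rewrite -(mulr_natr (T j i / N%:R)) divfK.
Qed.
End Main.


Unset Implicit Arguments. Set Strict Implicit.

Theorem proposition5p1 (R : realType) (n : nat) (adjG : rel 'I_n)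
    (adjG_sym : symmetric adjG) (A : pred (seq 'I_n))
    (HA : aut_inv_normal_subgroup adjG A) :
  exists C : bgraph -> Prop,
    skew_graph_category C /\
    forall (k l : nat) (T : l.-tuple 'I_n -> k.-tuple 'I_n -> R[i]),
      in_graph_span adjG C T <-> is_mor A adjG T.

Proof.
apply: main; assumption.
Qed.
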